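(* Let $s>0$, $Y>0$, $\tau\geq0$, and assume both components of $E_+=(x_+(\tau),y_+(\tau))=\left(\frac sYe^{s\tau},1-\frac sYe^{s\tau}\right)$ are positive. Let $p(\tau)=s\left(1+\frac{e^{s\tau}}{Y}\right)$, $q=-s$, $c(\tau)=s\left(1-\frac{2se^{s\tau}}{Y}\right)$, $\alpha(\tau)=\frac{s^2e^{s\tau}}{Y}$, and consider the characteristic equation \[ \lambda^2+p(\tau)\lambda+(q\lambda+c(\tau))e^{-\lambda\tau}+\alpha(\tau)=0 \tag{C} \] and the equation in $\omega$ \[ \omega^4+(p(\tau)^2-q^2-2\alpha(\tau))\omega^2+\alpha(\tau)^2-c(\tau)^2=0. \tag{Q} \] Let $\tau^*=\frac1s\ln\left(\frac{Y}{3s}\right)$ and \[ \omega_+(\tau)=\sqrt{\tfrac12\left(-x_+(\tau)^2+\sqrt{x_+(\tau)^4+s^2\left(12x_+(\tau)^2-16x_+(\tau)+4\right)}\right)}. \] \begin{enumerate} \item $\omega_+(\tau^* )=0$. If $\tau\geq\tau^*$, then (Q) has no positive real root, and therefore (C) has no purely imaginary roots. In particular, if $\frac sY\geq\frac13$, then $\tau^*\leq0$ and there can be no Hopf bifurcation of $E_+$ for any $\tau\geq0$. \item Assume $\frac sY<\frac13$, so $\tau^*>0$. If $\tau\in[0,\tau^* )$, then $x_+(\tau)\in[\frac sY,\frac13)$ and (Q) has exactly one positive real root, namely $\omega_+(\tau)$. If (C) has purely imaginary roots at $\tau$ (so $\tau$ is a candidate for a Hopf bifurcation of $E_+$), then $\tau\in(0,\tau^*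 )$ and these roots are $\pm i\omega_+(\tau)$ with $\omega_+(\tau)$ given by the formula above. \end{enumerate}
   Context: (C) is the characteristic equation of the linearization at $E_+$ of the delay system $\dot x=x(1-x)-yx$, $\dot y=-sy+Ye^{-s\tau}y(t-\tau)x(t-\tau)$; (Q) is obtained from substituting $\lambda=i\omega$, $\omega>0$, into (C) and eliminating $\tau\omega$. *)

(* Defs.v *)
From Stdlib Require Import Reals.
From Coquelicot Require Import Coquelicot.
Open Scope R_scope.

Definition Cexp (z : C) : C :=
  (exp (Re z) * cos (Im z), exp (Re z) * sin (Im z)).

Definition xplus (s Y tau : R) : R := s / Y * exp (s * tau).
Definition yplus (s Y tau : R) : R := 1 - s / Y * exp (s * tau).

Definition pc (s Y tau : R) : R := s * (1 + exp (s * tau) / Y).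
Definition qc (s : R) : R := - s.
Definition cc (s Y tau : R) : R := s * (1 - 2 * s * exp (s * tau) / Y).
Definition alphac (s Y tau : R) : R := s ^ 2 * exp (s * tau) / Y.

Definition charC (s Y tau : R) (lam : C) : Prop :=
  (lam * lam + RtoC (pc s Y tau) * lam
   + (RtoC (qc s) * lam + RtoC (cc s Y tau)) * Cexp (- lam * RtoC tau)
   + RtoC (alphac s Y tau))%C = RtoC 0.

Definition purely_imaginary (lam : C) : Prop := Re lam = 0 /\ lam <> RtoC 0.

Definition eqQ (s Y tau omega : R) : Prop :=
  omega ^ 4 + (pc s Y tau ^ 2 - qc s ^ 2 - 2 * alphac s Y tau) * omega ^ 2
  + alphac s Y tau ^ 2 - cc s Y tau ^ 2 = 0.

Definition tau_star (s Y : R) : R := / s * ln (Y / (3 * s)).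

Definition omega_plus (s Y tau : R) : R :=
  let x := xplus s Y tau in
  sqrt (/ 2 * (- x ^ 2 + sqrt (x ^ 4 + s ^ 2 * (12 * x ^ 2 - 16 * x + 4)))).

(* Main.v *)
Require Import Defs.
From Stdlib Require Import Reals Lra.
From Coquelicot Require Import Coquelicot.
Open Scope R_scope.

Lemma eqQ_x s Y tau w : 0 < Y -> eqQ s Y tau w <->
  w^4 + (xplus s Y tau)^2 * w^2 + s^2 * (3 * xplus s Y tau - 1) * (1 - xplus s Y tau) = 0.
Proof.
  intro hY; unfold eqQ, xplus, pc, qc, cc, alphac.
  set (E := exp (s * tau)).
  split; intro H; rewrite <- H; field; lra.
Qed.

Lemma xstar s Y : 0 < s -> 0 < Y -> exp (s * tau_star s Y) = Y / (3 * s).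
Proof.
  intros hs hY. unfold tau_star.
  replace (s * (/ s * ln (Y / (3 * s)))) with (ln (Y / (3*s))) by (field; lra).
  apply exp_ln. apply Rdiv_lt_0_compat; lra.
Qed.

Lemma x_diff s Y tau : 0 < s -> 0 < Y ->
  xplus s Y tau - /3 = s / Y * (exp (s*tau) - exp (s * tau_star s Y)).
Proof.
  intros hs hY. rewrite xstar by lra. unfold xplus. field. lra.
Qed.

Lemma tau_iff s Y tau : 0 < s -> 0 < Y -> (tau_star s Y <= tau <-> /3 <= xplus s Y tau).
Proof.
  intros hs hY. pose proof (x_diff s Y tau hs hY) as D.
  assert (sY : 0 < s / Y) by (apply Rdiv_lt_0_compat; lra).
  split; intro H.
  - destruct (Rle_lt_or_eq_dec _ _ H) as [h|h].
    + assert (exp (s * tau_star s Y) < exp (s*tau)) by (apply exp_increasing; nra). nra.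
    + subst. nra.
  - destruct (Rle_or_lt (tau_star s Y) tau) as [h|h]; auto.
    assert (exp (s * tau) < exp (s*tau_star s Y)) by (apply exp_increasing; nra). nra.
Qed.

Lemma x0 s Y : xplus s Y 0 = s / Y.
Proof. unfold xplus. rewrite Rmult_0_r, exp_0. ring. Qed.

Lemma noroot s x w : 0 < s -> /3 <= x -> x < 1 -> 0 < w ->
  w^4 + x^2 * w^2 + s^2 * (3 * x - 1) * (1 - x) <> 0.
Proof.
  intros. assert (0 <= s^2 * (3 * x - 1) * (1 - x)).
  { apply Rmult_le_pos; [apply Rmult_le_pos|]; nra. }
  assert (0 < w^4) by (apply pow_lt; lra). nra.
Qed.

Lemma root_props s x : 0 < s -> 0 < x < /3 ->
  let w := sqrt (/ 2 * (- x ^ 2 + sqrt (x ^ 4 + s ^ 2 * (12 * x ^ 2 - 16 * x + 4)))) in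
  0 < w /\ w^4 + x^2 * w^2 + s^2 * (3 * x - 1) * (1 - x) = 0 /\
  (forall v, 0 < v -> v^4 + x^2 * v^2 + s^2 * (3 * x - 1) * (1 - x) = 0 -> v = w).
Proof.
  intros hs hx w.
  set (D := x ^ 4 + s ^ 2 * (12 * x ^ 2 - 16 * x + 4)) in *.
  assert (HD : x^4 < D).
  { unfold D. assert (0 < s^2 * (12 * x ^ 2 - 16 * x + 4)); [|lra].
    apply Rmult_lt_0_compat; [apply pow_lt; lra| nra]. }
  assert (D0 : 0 <= D) by (assert (0 <= x^4) by (apply pow_le; lra); lra).
  set (r := sqrt D) in *.
  assert (rr : r * r = D) by (apply sqrt_sqrt; auto).
  assert (r0 : 0 <= r) by apply sqrt_pos.
  assert (rx : x^2 < r) by (destruct (Rle_or_lt r (x^2)); auto; nra).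
  set (u := / 2 * (- x ^ 2 + r)) in *.
  assert (u0 : 0 < u) by (unfold u; lra).
  assert (wu : w^2 = u) by (unfold w; rewrite <- Rsqr_pow2; apply Rsqr_sqrt; lra).
  assert (w0 : 0 < w) by (apply sqrt_lt_R0; auto).
  assert (Qu : u^2 + x^2 * u + s^2 * (3 * x - 1) * (1 - x) = 0).
  { replace (u^2 + x^2 * u + s^2 * (3 * x - 1) * (1 - x)) with ((r*r - D)/4)
      by (unfold u, D; field). rewrite rr. field. }
  split; [auto|split].
  - replace (w^4) with ((w^2)^2) by ring. rewrite wu. auto.
  - intros v v0 Hv.
    replace (v^4) with ((v^2)^2) in Hv by ring.
    assert (v^2 = u).
    { assert ((v^2 - u) * (v^2 + u + x^2) = 0) by nra.
      assert (0 < v^2 + u + x^2) by nra.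
      destruct (Rmult_integral _ _ H); nra. }
    assert (v*v = w*w) by nra. nra.
Qed.

Lemma charC_parts s Y tau b : charC s Y tau (0, b) ->
  - b^2 + alphac s Y tau + cc s Y tau * cos (b*tau) + qc s * b * sin (b*tau) = 0 /\
  pc s Y tau * b + qc s * b * cos (b*tau) - cc s Y tau * sin (b*tau) = 0.
Proof.
  unfold charC, Cexp; intro H.
  pose proof (f_equal fst H) as H1; pose proof (f_equal snd H) as H2.
  simpl in H1, H2.
  replace (- 0 * tau - - b * 0) with 0 in H1, H2 by ring.
  replace (- 0 * 0 + - b * tau) with (-(b*tau)) in H1, H2 by ring.
  rewrite exp_0, cos_neg, sin_neg in H1, H2.
  split; nra.
Qed.

Lemma key p q c al w co si : co^2+si^2=1 -> -w^2+al+c*co+q*w*si=0 -> p*w+q*w*co-c*si=0 ->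
  w^4+(p^2-q^2-2*al)*w^2+al^2-c^2=0.
Proof.
  intros Hcs H1 H2.
  replace (w^4+(p^2-q^2-2*al)*w^2+al^2-c^2) with ((al-w^2)^2 + (p*w)^2 - q^2*w^2 - c^2) by ring.
  replace (al - w^2) with (-(c*co+q*w*si)) by lra.
  replace (p*w) with (c*si - q*w*co) by lra.
  replace ((- (c * co + q * w * si)) ^ 2 + (c * si - q * w * co) ^ 2 - q ^ 2 * w ^ 2 - c ^ 2)
    with ((c^2 + q^2*w^2)*(co^2+si^2-1)) by ring.
  rewrite Hcs. ring.
Qed.

Lemma char_to_Q s Y tau b : charC s Y tau (0, b) -> eqQ s Y tau (Rabs b).
Proof.
  intro H. destruct (charC_parts _ _ _ _ H) as [H1 H2].
  unfold eqQ.
  replace (Rabs b ^ 4) with ((Rabs b ^ 2)^2) by ring.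
  rewrite pow2_abs. replace ((b^2)^2) with (b^4) by ring.
  eapply key; eauto.
  rewrite <- !Rsqr_pow2. rewrite Rplus_comm. apply sin2_cos2.
Qed.

Lemma pi_char s Y tau lam : purely_imaginary lam -> charC s Y tau lam ->
  exists b, lam = (0, b) /\ b <> 0 /\ eqQ s Y tau (Rabs b) /\ charC s Y tau (0,b).
Proof.
  destruct lam as [a b]. intros [Ha Hn] Hc. simpl in Ha. subst a.
  exists b. split; auto. split.
  - intro; subst; apply Hn; reflexivity.
  - split; auto. apply char_to_Q; auto.
Qed.

Lemma part1 s Y tau : 0 < s -> 0 < Y -> 0 < xplus s Y tau -> 0 < yplus s Y tau ->
  tau_star s Y <= tau ->
  (~ exists omega : R, 0 < omega /\ eqQ s Y tau omega) /\
  (~ exists lam : C, purely_imaginary lam /\ charC s Y tau lam).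
Proof.
  intros hs hY hx hy ht.
  apply (tau_iff s Y tau hs hY) in ht.
  assert (x1 : xplus s Y tau < 1) by (unfold yplus, xplus in *; lra).
  assert (A : ~ exists omega : R, 0 < omega /\ eqQ s Y tau omega).
  { intros [w [w0 Hw]]. apply (proj1 (eqQ_x s Y tau w hY)) in Hw.
    exact (noroot s (xplus s Y tau) w hs ht x1 w0 Hw). }
  split; auto.
  intros [lam [Hp Hc]]. destruct (pi_char _ _ _ _ Hp Hc) as [b [_ [bn [HQ _]]]].
  apply A. exists (Rabs b). split; auto. apply Rabs_pos_lt; auto.
Qed.

Lemma xstar3 s Y : 0 < s -> 0 < Y -> xplus s Y (tau_star s Y) = /3.
Proof. intros. pose proof (x_diff s Y (tau_star s Y) H H0). rewrite Rminus_diag, Rmult_0_r in H1. lra. Qed.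

Theorem theorem3p3 (s Y : R) (hs : 0 < s) (hY : 0 < Y) :
  (* part 1 *)
  omega_plus s Y (tau_star s Y) = 0 /\
  (forall tau : R, 0 <= tau -> 0 < xplus s Y tau -> 0 < yplus s Y tau ->
     tau_star s Y <= tau ->
     (~ exists omega : R, 0 < omega /\ eqQ s Y tau omega) /\
     (~ exists lam : C, purely_imaginary lam /\ charC s Y tau lam)) /\
  (/ 3 <= s / Y ->
     tau_star s Y <= 0 /\
     forall tau : R, 0 <= tau -> 0 < xplus s Y tau -> 0 < yplus s Y tau ->
       ~ exists lam : C, purely_imaginary lam /\ charC s Y tau lam) /\
  (* part 2 *)
  (s / Y < / 3 ->
     0 < tau_star s Y /\
     (forall tau : R, 0 <= tau < tau_star s Y ->
        0 < xplus s Y tau -> 0 < yplus s Y tau ->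
        (s / Y <= xplus s Y tau < / 3) /\
        (0 < omega_plus s Y tau /\ eqQ s Y tau (omega_plus s Y tau) /\
         forall omega : R, 0 < omega -> eqQ s Y tau omega ->
           omega = omega_plus s Y tau)) /\
     (forall tau : R, 0 <= tau -> 0 < xplus s Y tau -> 0 < yplus s Y tau ->
        forall lam : C, purely_imaginary lam -> charC s Y tau lam ->
          (0 < tau < tau_star s Y) /\
          (lam = (0, omega_plus s Y tau) \/ lam = (0, - omega_plus s Y tau)))).
Proof.
  split.
  { unfold omega_plus. cbv zeta. rewrite xstar3 by auto.
    replace ((/ 3) ^ 4 + s ^ 2 * (12 * (/ 3) ^ 2 - 16 * / 3 + 4)) with (((/3)^2)^2) by field.
    rewrite sqrt_pow2 by (apply pow_le; lra).
    replace (/ 2 * (- (/ 3) ^ 2 + (/ 3) ^ 2)) with 0 by ring. apply sqrt_0. }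
  split.
  { intros tau _ hx hy ht. apply part1; auto. }
  split.
  { intros h3. assert (t0 : tau_star s Y <= 0).
    { apply (tau_iff s Y 0 hs hY). rewrite x0. auto. }
    split; auto.
    intros tau t hx hy. apply (part1 s Y tau hs hY hx hy). lra. }
  intros h3.
  assert (t0 : 0 < tau_star s Y).
  { destruct (Rle_or_lt (tau_star s Y) 0) as [h|h]; auto.
    apply (tau_iff s Y 0 hs hY) in h. rewrite x0 in h. lra. }
  assert (A : forall tau : R, 0 <= tau < tau_star s Y ->
        0 < xplus s Y tau -> 0 < yplus s Y tau ->
        (s / Y <= xplus s Y tau < / 3) /\
        (0 < omega_plus s Y tau /\ eqQ s Y tau (omega_plus s Y tau) /\
         forall omega : R, 0 < omega -> eqQ s Y tau omega ->
           omega = omega_plus s Y tau)).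
  { intros tau [t1 t2] hx hy.
    assert (xl : xplus s Y tau < /3).
    { destruct (Rle_or_lt (/3) (xplus s Y tau)) as [h|h]; auto.
      apply (tau_iff s Y tau hs hY) in h. lra. }
    assert (xg : s / Y <= xplus s Y tau).
    { unfold xplus. assert (0 < s / Y) by (apply Rdiv_lt_0_compat; lra).
      assert (1 <= exp (s * tau)).
      { rewrite <- exp_0. destruct (Rle_lt_or_eq_dec 0 (s*tau)) as [h|h].
        - apply Rmult_le_pos; lra.
        - left; apply exp_increasing; auto.
        - rewrite h; lra. }
      nra. }
    split; [lra|].
    pose proof (root_props s (xplus s Y tau) hs (conj hx xl)) as R. cbv zeta in R.
    destruct R as [R1 [R2 R3]].
    unfold omega_plus; cbv zeta.
    split; auto. split.
    - apply eqQ_x; auto.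
    - intros w w0 Hw. apply R3; auto. apply eqQ_x; auto. }
  split; auto. split; auto.
  intros tau t hx hy lam Hp Hc.
  destruct (pi_char _ _ _ _ Hp Hc) as [b [-> [bn [HQ Hc']]]].
  assert (tl : tau < tau_star s Y).
  { destruct (Rle_or_lt (tau_star s Y) tau) as [h|h]; auto.
    exfalso. apply (proj2 (part1 s Y tau hs hY hx hy h)). exists (0,b); auto. }
  assert (tp : 0 < tau).
  { destruct (Rle_lt_or_eq_dec 0 tau t) as [h|h]; auto. subst tau.
    exfalso. destruct (charC_parts _ _ _ _ Hc') as [_ H2].
    rewrite Rmult_0_r, cos_0, sin_0 in H2.
    assert (E : pc s Y 0 + qc s = xplus s Y 0) by (unfold pc, qc, xplus; field; lra).
    assert ((pc s Y 0 + qc s) * b = 0) by lra. rewrite E in H.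
    destruct (Rmult_integral _ _ H); lra. }
  split; [lra|].
  destruct (A tau (conj t tl) hx hy) as [_ [_ [_ U]]].
  assert (Hb : Rabs b = omega_plus s Y tau) by (apply U; auto; apply Rabs_pos_lt; auto).
  destruct (Rcase_abs b) as [h|h].
  - rewrite Rabs_left in Hb by auto. right. f_equal. lra.
  - rewrite Rabs_right in Hb by auto. left. f_equal. lra.
Qed.
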